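(* Assume $n>3t+2d$. In any execution of Algorithm 1, the mbrb-broadcast of an app-message by a correct process $p_i$ entails the sending of at most $2n^2$ implementation messages by correct processes.
   Context: System model. There are $n$ asynchronous processes $p_1,\dots,p_n$ with distinct known identities. Up to $t$ are Byzantine (arbitrary behavior); the rest are correct; $c$ is the number of correct processes. The network is fully connected, asynchronous, never corrupts/duplicates/creates messages; ''broadcast $M$'' sends $M$ to all $n$ processes (counting as $n$ sent imp-messages); a message adversary may suppress, per broadcast by a correct process, up to $d<c$ copies addressed to correct processes. Signatures are unforgeable and public keys are known. Algorithm 1 (code for $p_i$). Each process stores, for each triplet $(m,sn,j)$, a set of saved valid signatures of that triplet, at most one per signer. On $\mathrm{mbrb\_broadcast}(m,sn)$: $p_i$ saves its own signature of $(m,sn,i)$ and broadcasts $\mathrm{BUNDLE}(m,sn,i,S)$, $S$ the saved signatures for $(m,sn,i)$. On receiving $\mathrm{BUNDLE}(m,sn,j,sigs)$: if $p_i$ has not already mbrb-delivered some $(-,sn,j)$ and $sigs$ contains a valid signature of $(m,sn,j)$ by $p_j$, then: (1) save all new valid signatures of $(m,sn,j)$ in $sigs$; (2) if $p_i$ has not yet signed any $(-,sn,j)$, save its own signature of $(m,sn,j)$ and broadcast $\mathrm{BUNDLE}(m,sn,j,\text{all saved signatures for }(m,sn,j))$; (3) if strictly more than $\frac{n+t}{2}$ signatures for $(m,sn,j)$ are saved, broadcast $\mathrm{BUNDLE}(m,sn,j,\text{all saved signatures})$ and mbrb-deliver $(m,sn,j)$. *)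

(* Defs.v *)
From mathcomp Require Import all_boot.
Set Implicit Arguments. Unset Strict Implicit. Unset Printing Implicit Defensive.

Section MBRB.
Variables (n t : nat) (M : eqType) (B : {set 'I_n}).
(* n processes 'I_n; B = set of Byzantine processes; t = resilience bound,
   used in the delivery threshold (n+t)/2; M = app-messages. *)

Definition proc := 'I_n.
Definition triplet := (M * nat * proc)%type.
(* symbolic signature: (k, tr) is the (unique, unforgeable) signature of tr by p_k *)
Definition signature := (proc * triplet)%type.
Definition bundle := (triplet * seq signature)%type.

Record lstate := LState {
  saved : triplet -> seq signature;
  signed : nat -> proc -> bool;          (* has signed some (-, sn, j) *)
  delivered : nat -> proc -> bool }.     (* has mbrb-delivered some (-, sn, j) *)

Definition lstate0 : lstate :=
  LState (fun _ => [::]) (fun _ _ => false) (fun _ _ => false).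

Definition upd_saved (st : lstate) (tr : triplet) (S : seq signature) : lstate :=
  LState (fun tr' => if tr' == tr then S else saved st tr') (signed st) (delivered st).
Definition set_signed (st : lstate) (sn : nat) (j : proc) : lstate :=
  LState (saved st) (fun sn' j' => ((sn' == sn) && (j' == j)) || signed st sn' j')
         (delivered st).
Definition set_delivered (st : lstate) (sn : nat) (j : proc) : lstate :=
  LState (saved st) (signed st)
         (fun sn' j' => ((sn' == sn) && (j' == j)) || delivered st sn' j').

Definition save_new (S : seq signature) (tr : triplet) (sigs : seq signature) :=
  foldl (fun acc s => if (s.2 == tr) && (s \notin acc) then rcons acc s else acc) S sigs.

Definition on_bundle (k : proc) (st : lstate) (b : bundle) : lstate * seq bundle :=
  let tr := b.1 in let sigs := b.2 in
  let sn := tr.1.2 in let j := tr.2 in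
  if ~~ delivered st sn j && ((j, tr) \in sigs) then
    let st1 := upd_saved st tr (save_new (saved st tr) tr sigs) in
    let p2 := if ~~ signed st1 sn j then
                let S2 := save_new (saved st1 tr) tr [:: (k, tr)] in
                (set_signed (upd_saved st1 tr S2) sn j, [:: (tr, S2)])
              else (st1, [::]) in
    let st2 := p2.1 in
    (* (3) : strictly more than (n+t)/2 saved signatures *)
    if n + t < 2 * size (saved st2 tr) then
      (set_delivered st2 sn j, p2.2 ++ [:: (tr, saved st2 tr)])
    else p2
  else (st, [::]).

(* point-to-point imp-messages: (sender, receiver, content) *)
Definition netmsg := (proc * proc * bundle)%type.

Definition bcast (i : proc) (b : bundle) : seq netmsg :=
  [seq (i, k, b) | k <- enum 'I_n].

Record config := Config {
  lst : proc -> lstate;             (* local states (meaningful for correct processes) *)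
  net : seq netmsg;                 (* messages sent by correct processes, in transit *)
  sent : seq netmsg;                (* log of all imp-messages sent by correct processes *)
  invoked : seq (proc * M * nat) }.

Definition config0 : config := Config (fun _ => lstate0) [::] [::] [::].

Definition upd_lst (f : proc -> lstate) (i : proc) (st : lstate) : proc -> lstate :=
  fun k => if k == i then st else f k.

Definition do_invoke (c : config) (i : proc) (m : M) (sn : nat) : config :=
  let st := lst c i in
  let tr : triplet := (m, sn, i) in
  let S := save_new (saved st tr) tr [:: (i, tr)] in
  let st' := set_signed (upd_saved st tr S) sn i in
  let out := bcast i (tr, S) in
  Config (upd_lst (lst c) i st') (net c ++ out) (sent c ++ out)
         (rcons (invoked c) (i, m, sn)).

Definition do_receive (c : config) (k : proc) (net' : seq netmsg) (b : bundle) : config :=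
  let r := on_bundle k (lst c k) b in
  let out := flatten [seq bcast k o | o <- r.2] in
  Config (upd_lst (lst c) k r.1) (net' ++ out) (sent c ++ out) (invoked c).

(* Unforgeability: a Byzantine process can only use signatures of Byzantine
   signers, or signatures it has received from correct processes. *)
Definition byz_can_send (c : config) (b : bundle) : bool :=
  all (fun s : signature => (s.1 \in B) ||
         has (fun e : netmsg => (e.1.2 \in B) && (s \in e.2.2)) (sent c)) b.2.

Inductive step : config -> config -> Prop :=
| StepInvoke c i m sn :
    i \notin B ->
    ~~ has (fun e : proc * M * nat => (e.1.1 == i) && (e.2 == sn)) (invoked c) ->
    step c (do_invoke c i m sn)
| StepRecvCorrect c i k b :
    k \notin B -> (i, k, b) \in net c ->
    step c (do_receive c k (rem (i, k, b) (net c)) b)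
| StepRecvByz c (j k : proc) b :
    j \in B -> k \notin B -> byz_can_send c b ->
    step c (do_receive c k (net c) b).

Inductive reachable : config -> Prop :=
| Reach0 : reachable config0
| ReachS c c' : reachable c -> step c c' -> reachable c'.

Definition imp_msgs_for (c : config) (tr : triplet) : nat :=
  count (fun e : netmsg => (e.1.1 \notin B) && (e.2.1 == tr)) (sent c).

End MBRB.

(* Main.v *)
Require Import Defs.
From mathcomp Require Import all_boot.
Set Implicit Arguments. Unset Strict Implicit.

Section H.
Variables (n t : nat) (M : eqType) (B : {set 'I_n}).

Lemma save_newP (S : seq (signature n M)) tr sigs s :
  s \in save_new S tr sigs -> (s \in S) \/ (s \in sigs).
Proof.
rewrite /save_new; elim: sigs S => [|x xs IH] S /=; first by left.
move=> /IH [].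
  case: ifP => _; last by left.
  by rewrite mem_rcons inE => /orP [/eqP->|]; [right; rewrite inE eqxx|left].
by move=> H; right; rewrite inE H orbT.
Qed.

Definition NEW k (st : lstate n M) (b : bundle n M) (s : signature n M) :=
  (s \in saved st b.1) \/ (s \in b.2) \/ (s = (k, b.1) /\ (b.1.2, b.1) \in b.2).

Lemma on_bundle_spec k st b :
  let r := on_bundle t k st b in
  (forall o, o \in r.2 -> o.1 = b.1) /\
  (forall o s, o \in r.2 -> s \in o.2 -> NEW k st b s) /\
  (forall tr s, s \in saved r.1 tr -> s \in saved st tr \/ NEW k st b s) /\
  (forall sn j, signed st sn j -> signed r.1 sn j) /\
  (forall sn j, delivered st sn j -> delivered r.1 sn j) /\
  (forall sn j, signed r.1 sn j || delivered r.1 sn j ->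
      signed st sn j || delivered st sn j \/ (sn = b.1.1.2 /\ j = b.1.2 /\ (b.1.2, b.1) \in b.2)) /\
  size r.2 + signed st b.1.1.2 b.1.2 + delivered st b.1.1.2 b.1.2 <=
      signed r.1 b.1.1.2 b.1.2 + delivered r.1 b.1.1.2 b.1.2.
Proof.
case: b => [[[m sn] j] sigs] /=.
rewrite /on_bundle /=.
case: ifP => [/andP [nd hj]|_]; last first.
  repeat split=> //=; [by move=> ? ? ?; left|by move=> ? ? ->; left].
set tr := (m, sn, j).
rewrite !eqxx /=.
set S1 := save_new _ tr sigs.
have N1 s : s \in S1 -> NEW k st (tr, sigs) s.
  by case/save_newP; [left|right; left].
have N2 s : s \in (if (k, tr) \notin S1 then rcons S1 (k, tr) else S1) -> NEW k st (tr, sigs) s.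
  case: ifP => _; last exact: N1.
  rewrite mem_rcons inE => /orP [/eqP->|/N1] //.
  by right; right.
have mem2 (o x y : bundle n M) : o \in [:: x; y] -> o = x \/ o = y.
  by rewrite !inE => /orP [/eqP|/eqP]; auto.
have mem1 (o x : bundle n M) : o \in [:: x] -> o = x.
  by rewrite !inE => /eqP.
rewrite (negbTE nd).
case hs: (signed st sn j) => /=; rewrite ?eqxx /=.
  case: ifP => ht /=; rewrite ?eqxx /=.
    split; first by move=> o /mem1 ->.
    split; first by move=> o s /mem1 -> /= /N1.
    split. move=> tr0 s; case: eqP => [-> /N1|_]; auto.
    split; first by move=> ? ? H; rewrite /= H ?orbT.
    split; first by move=> ? ? H; rewrite /= H ?orbT.
    split; last by rewrite hs.
    move=> sn0 j0; case: (boolP ((sn0 == sn) && (j0 == j))) => [/andP[/eqP-> /eqP->] _|/negbTE E]; [by right; auto|rewrite /= ?orbF => H; by left].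
  split; first by [].
  split; first by [].
  split. move=> tr0 s; case: eqP => [-> /N1|_]; auto.
  split; first by [].
  split; first by [].
  split; last by rewrite hs.
  by move=> sn0 j0 ->; left.
case: ifP => ht /=; rewrite ?eqxx /=.
  split; first by move=> o /mem2 [] ->.
  split; first by move=> o s /mem2 [] -> /= /N2.
  split. move=> tr0 s; case: eqP => [-> /N2|_]; auto.
  split; first by move=> ? ? H; rewrite /= H ?orbT.
  split; first by move=> ? ? H; rewrite /= H ?orbT.
  split; last by [].
  move=> sn0 j0; case: (boolP ((sn0 == sn) && (j0 == j))) => [/andP[/eqP-> /eqP->] _|/negbTE E]; [by right; auto|rewrite /= ?orbF => H; by left].
split; first by move=> o /mem1 ->.
split; first by move=> o s /mem1 -> /= /N2.
split. move=> tr0 s; case: eqP => [-> /N2|_]; auto.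
split; first by move=> ? ? H; rewrite /= H ?orbT.
split; first by [].
split; last by [].
move=> sn0 j0; case: (boolP ((sn0 == sn) && (j0 == j))) => [/andP[/eqP-> /eqP->] _|/negbTE E]; [by right; auto|rewrite /= ?orbF => H; by left].
Qed.


Definition cntp (k : proc n) sn (j : proc n) (e : netmsg n M) :=
  (e.1.1 == k) && ((e.2.1.1.2 == sn) && (e.2.1.2 == j)).

Lemma count_bcast k k' sn j (tr : triplet n M) (out : seq (bundle n M)) :
  (forall o, o \in out -> o.1 = tr) ->
  count (cntp k' sn j) (flatten [seq bcast k o | o <- out]) =
  if (k' == k) && ((tr.1.2 == sn) && (tr.2 == j)) then n * size out else 0.
Proof.
elim: out => [|o out IH] H /=; first by case: ifP; rewrite ?muln0.
rewrite count_cat IH; last by move=> o' Ho'; apply: H; rewrite inE Ho' orbT.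
rewrite /bcast count_map.
have E := H o (mem_head _ _).
rewrite /cntp /preim /= E [k == k']eq_sym.
case: ifP => _.
  by rewrite (eq_count (a2 := predT)) // count_predT size_enum_ord mulnS.
by rewrite (eq_count (a2 := pred0)) // count_pred0.
Qed.

Lemma in_flat_bcast k (out : seq (bundle n M)) e :
  e \in flatten [seq bcast k o | o <- out] -> e.1.1 = k /\ e.2 \in out.
Proof.
case/flattenP => x /mapP [o Ho ->] /mapP [k' _ ->] /=; by split.
Qed.

Lemma count_split (P : pred (netmsg n M)) s :
  count P s = \sum_(k < n) count (fun e => (e.1.1 == k) && P e) s.
Proof.
elim: s => [|x s IH] /=; first by rewrite big1.
rewrite big_split /= -IH; congr (_ + _).
rewrite (bigD1 x.1.1) //= eqxx big1 ?addn0 // => k /negbTE.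
by rewrite eq_sym => ->.
Qed.

Lemma imp_leq (a b : bool) : (a -> b) -> a <= b.
Proof. by case: a; case: b => // ->. Qed.

Definition Pinv (c : config n M) (s : signature n M) : Prop :=
  s.1 \notin B -> s.2.2 = s.1 -> (s.1, s.2.1.1, s.2.1.2) \in invoked c.

Definition Inv (c : config n M) :=
 (forall k tr s, s \in saved (lst c k) tr -> Pinv c s) /\
 (forall e s, e \in sent c -> s \in e.2.2 -> Pinv c s) /\
 (forall e s, e \in net c -> s \in e.2.2 -> Pinv c s) /\
 (forall k sn, k \notin B -> signed (lst c k) sn k || delivered (lst c k) sn k ->
     exists m, (k, m, sn) \in invoked c) /\
 (forall k sn j, count (cntp k sn j) (sent c) <=
     n * (signed (lst c k) sn j + delivered (lst c k) sn j)).

Lemma recv_preserve (c : config n M) (k : proc n) (net' : seq (netmsg n M)) (b : bundle n M) :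
  Inv c -> k \notin B -> (forall s, s \in b.2 -> Pinv c s) ->
  (forall e s, e \in net' -> s \in e.2.2 -> Pinv c s) ->
  Inv (do_receive t c k net' b).
Proof.
move=> [I1 [I2 [I5 [I3 I4]]]] kB Hb Hnet.
have [O1 [O2 [O3 [O4 [O5 [O6 O7]]]]]] := on_bundle_spec k (lst c k) b.
set r := on_bundle t k (lst c k) b in O1 O2 O3 O4 O5 O6 O7 *.
have HN s : NEW k (lst c k) b s -> Pinv c s.
  case=> [/I1 //|[/Hb //|[-> hb]]].
  move=> kB' /= E; have := Hb _ hb; rewrite /Pinv /= E; by apply.
rewrite /Inv /do_receive /upd_lst /=.
split.
  move=> k' tr s; case: eqP => [_ /O3 [/I1|/HN]|_ /I1] //.
split.
  move=> e s; rewrite mem_cat => /orP [He Hs|/in_flat_bcast [_ Ho] Hs]; first exact: I2 He Hs.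
  exact: HN (O2 _ _ Ho Hs).
split.
  move=> e s; rewrite mem_cat => /orP [He Hs|/in_flat_bcast [_ Ho] Hs]; first exact: Hnet He Hs.
  exact: HN (O2 _ _ Ho Hs).
split.
  move=> k' sn kB'; case: eqP => [E0|_]; last exact: I3.
  subst k'; move/O6 => [H|[Esn [E hb]]]; first exact: I3.
  exists b.1.1.1; have := Hb _ hb; rewrite /Pinv /= E Esn => H.
  by apply: H; rewrite -E.
move=> k' sn j; rewrite count_cat (@count_bcast _ _ _ _ b.1) //.
case: eqP => [->|ne]; last by rewrite andFb addn0; exact: I4.
rewrite andTb.
case: ifP => [/andP [/eqP <- /eqP <-]|_].
  apply: leq_trans (leq_add (I4 _ _ _) (leqnn _)) _.
  rewrite -mulnDr leq_mul2l; apply/orP; right.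
  by rewrite [_ + size _]addnC addnA.
rewrite addn0; apply: leq_trans (I4 _ _ _) _; rewrite leq_mul2l leq_add ?orbT //;
  apply: imp_leq; auto.
Qed.

Lemma count_const (b : bool) : count (fun _ : 'I_n => b) (enum 'I_n) = b * n.
Proof.
case: b; first by rewrite mul1n (eq_count (a2 := predT)) // count_predT size_enum_ord.
by rewrite mul0n (eq_count (a2 := pred0)) // count_pred0.
Qed.

Lemma invoke_preserve (c : config n M) (i : proc n) (m : M) (sn : nat) :
  Inv c -> i \notin B ->
  ~~ has (fun e : proc n * M * nat => (e.1.1 == i) && (e.2 == sn)) (invoked c) ->
  Inv (do_invoke c i m sn).
Proof.
move=> [I1 [I2 [I5 [I3 I4]]]] iB G.
have mono s : Pinv c s -> Pinv (do_invoke c i m sn) s.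
  move=> H h1 h2; rewrite /= mem_rcons inE H ?orbT //.
have HS s : s \in save_new (saved (lst c i) (m, sn, i)) (m, sn, i) [:: (i, (m, sn, i))] ->
    Pinv (do_invoke c i m sn) s.
  case/save_newP => [/I1 /mono //|]; rewrite inE => /eqP -> _ _.
  by rewrite /= mem_rcons inE eqxx.
have NS : ~~ (signed (lst c i) sn i || delivered (lst c i) sn i).
  apply/negP => /(I3 _ _ iB) [m0 Hm0]; move/negP: G; apply; apply/hasP.
  by exists (i, m0, sn) => //=; rewrite !eqxx.
rewrite negb_or in NS; case/andP: NS => ns nd.
rewrite /Inv /do_invoke /upd_lst /=.
split.
  move=> k tr s; case: eqP => [_|_ /I1 /mono //] /=.
  case: eqP => [_ /HS //|_ /I1 /mono //].
split.
  move=> e s; rewrite mem_cat => /orP [He Hs|/mapP [k _ ->] /= /HS //].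
  exact: mono (I2 _ _ He Hs).
split.
  move=> e s; rewrite mem_cat => /orP [He Hs|/mapP [k _ ->] /= /HS //].
  exact: mono (I5 _ _ He Hs).
split.
  move=> k sn' kB; case: eqP => [->|_ /(I3 _ _ kB) [m0 H]]; last first.
    by exists m0; rewrite mem_rcons inE H orbT.
  case: (sn' =P sn) => [-> _|ne] /=; first by exists m; rewrite mem_rcons inE eqxx.
  rewrite (introF eqP ne) /= => /(I3 _ _ iB) [m0 H].
  by exists m0; rewrite mem_rcons inE H orbT.
move=> k sn' j; rewrite count_cat /bcast count_map.
rewrite [X in _ + X](_ : _ = count (fun _ : 'I_n => (i == k) && ((sn == sn') && (i == j))) (enum 'I_n)); last by apply: eq_count.
rewrite count_const.
case: (k =P i) => [->|ne]; last first.
  rewrite eq_sym (introF eqP ne) /= addn0; exact: I4.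
rewrite eqxx /=.
case: (sn' =P sn) => [->|ne1]; last first.
  rewrite eq_sym (introF eqP ne1) /= addn0; exact: I4.
case: (j =P i) => [->|ne2]; last first.
  rewrite eq_sym (introF eqP ne2) /= andbF addn0 /=; exact: I4.
rewrite !eqxx /= (negbTE nd).
have := I4 i sn i; rewrite (negbTE ns) (negbTE nd) muln0 leqn0 => /eqP ->.
by rewrite mul1n muln1.
Qed.

Lemma Inv0 : Inv (config0 n M).
Proof.
by rewrite /Inv /=; do 4 (split => //).
Qed.

Lemma reach_inv c : reachable t B c -> Inv c.
Proof.
elim=> [|c0 c' _ IH Hs]; first exact: Inv0.
case: c0 c' / Hs IH => [c0 i m sn iB G|c0 i k b kB Hin|c0 j k b jB kB Hbyz] IH.
- exact: invoke_preserve.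
- have [_ [_ [I5 _]]] := IH.
  apply: recv_preserve => //.
    by move=> s Hs; exact: I5 Hin Hs.
  by move=> e s /mem_rem He Hs; exact: I5 He Hs.
- have [_ [I2 [I5 _]]] := IH.
  apply: recv_preserve => //.
  move=> s Hs; move/allP: Hbyz => /(_ s Hs) /orP [sB|/hasP [e He /andP [_ Hse]]].
    by move=> /negP.
  exact: I2 He Hse.
Qed.

End H.
Unset Implicit Arguments. Set Strict Implicit.

Theorem mainTheorem11 (n t d : nat) (M : eqType) (B : {set 'I_n}) :
  #|B| <= t -> d < n - #|B| -> 3 * t + 2 * d < n ->
  forall c : config n M, reachable t B c ->
  forall (i : 'I_n) (m : M) (sn : nat),
    i \notin B -> (i, m, sn) \in invoked c ->
    imp_msgs_for B c (m, sn, i) <= 2 * n ^ 2.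
Proof.
move=> _ _ _ c Hc i m sn _ _.
have [_ [_ [_ [_ I4]]]] := reach_inv Hc.
rewrite /imp_msgs_for.
apply: (@leq_trans (count (fun e : netmsg n M => (e.2.1.1.2 == sn) && (e.2.1.2 == i)) (sent c))).
  apply: sub_count => e /andP [_ /eqP ->] /=; by rewrite !eqxx.
rewrite count_split.
apply: (@leq_trans (\sum_(k < n) (2 * n))).
  apply: leq_sum => k _.
  apply: leq_trans (I4 k sn i) _.
  rewrite mulnC leq_mul2r; apply/orP; right; exact: leq_add (leq_b1 _) (leq_b1 _).
by rewrite sum_nat_const card_ord mulnC mulnA.
Qed.
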